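(* Let $\lambda = (\lambda_1,\dots,\lambda_r)$ be a partition of $n$ with all $\lambda_i > 0$. For $T \subseteq \{1,\dots,r\}$ let $\lambda^{\downarrow T} = (\lambda_1 - \chi_T(1), \dots, \lambda_r - \chi_T(r))$, where $\chi_T$ is the indicator function of $T$. Then $$f_{\lambda,n-\lambda_1}(q) = \sum_{S \subseteq \{ 2,\dots, r \}} q^{|S| n - \binom{|S| + 1}{2}}\, f_{\lambda^{\downarrow (S \cup \{1 \})},\,n-\lambda_1-|S|}(q),$$ with the convention that $f_{\gamma,i}=0$ whenever $\gamma$ is not a partition (i.e. not weakly decreasing).
   Context: For a partition $\lambda\vdash N$ (trailing zero parts allowed), a standard Young tableau of shape $\lambda$ is a filling of the Ferrers diagram with $1,\dots,N$, increasing along rows and down columns; it has a descent at $m$ if $m+1$ lies in a strictly lower row than $m$; $\mathrm{des}$ is the number of descents and $\mathrm{maj}$ their sum. $f_{\lambda,i}(q)=\sum q^{\mathrm{maj}(\tau)}$ over standard Young tableaux of shape $\lambda$ with $\mathrm{des}(\tau)=i$. *)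

(* Defs.v *)
From HB Require Import structures.
From mathcomp Require Import all_boot all_order all_algebra.
Set Implicit Arguments. Unset Strict Implicit. Unset Printing Implicit Defensive.
Import GRing.Theory.

(* A partition is a weakly decreasing sequence of naturals (trailing zeros allowed). *)
Definition is_partition (lam : seq nat) : bool := sorted geq lam.

(* Rows and columns are 0-indexed: cell (i,j) is in row i (row 0 is the top). *)
Definition in_diag (lam : seq nat) (i j : nat) : bool := j < nth 0 lam i.

(* A filling of the Ferrers diagram of lam (N = sumn lam): a finite function on
   'I_(size lam) * 'I_N with values in {0..N}; cells outside the diagram carry 0. *)
Definition filling (lam : seq nat) :=
  {ffun 'I_(size lam) * 'I_(sumn lam) -> 'I_(sumn lam).+1}.

Definition cell (lam : seq nat) := ('I_(size lam) * 'I_(sumn lam))%type.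

Definition is_syt (lam : seq nat) (t : filling lam) : bool :=
  [&& [forall c : cell lam, if in_diag lam (val c.1) (val c.2) then 0 < t c else val (t c) == 0],
      [forall c : cell lam, forall d : cell lam,
         [&& in_diag lam (val c.1) (val c.2), in_diag lam (val d.1) (val d.2) & t c == t d] ==> (c == d)],
      [forall c : cell lam, forall d : cell lam,
         [&& in_diag lam (val d.1) (val d.2), val c.1 == val d.1 & (val c.2).+1 == val d.2]
           ==> (val (t c) < val (t d))] &
      [forall c : cell lam, forall d : cell lam,
         [&& in_diag lam (val d.1) (val d.2), (val c.1).+1 == val d.1 & val c.2 == val d.2]
           ==> (val (t c) < val (t d))]].

Definition rowof (lam : seq nat) (t : filling lam) (m : nat) : nat :=
  if [pick c : cell lam | val (t c) == m] is Some c then val c.1 else 0.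

Definition descent (lam : seq nat) (t : filling lam) (m : nat) : bool :=
  rowof t m < rowof t m.+1.

Definition des (lam : seq nat) (t : filling lam) : nat :=
  \sum_(1 <= m < sumn lam | descent t m) 1.

Definition maj (lam : seq nat) (t : filling lam) : nat :=
  \sum_(1 <= m < sumn lam | descent t m) m.

(* f_{lam,i}(q) as a polynomial in q = 'X with integer coefficients;
   by convention 0 when lam is not a partition. *)
Definition fpoly (lam : seq nat) (i : nat) : {poly int} :=
  (if is_partition lam then
    (\sum_(t : filling lam | is_syt t && (des t == i)) 'X^(maj t))%R
  else 0)%R.

(* lam^{down T}: subtract 1 from the parts with (0-based) index in T. *)
Definition lower (lam : seq nat) (T : pred nat) : seq nat :=
  [seq nth 0 lam i - T i | i <- iota 0 (size lam)].

(* Main.v *)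
Require Import Defs.
From HB Require Import structures.
From mathcomp Require Import all_boot all_order all_algebra.
From mathcomp Require Import zify.
Import GRing.Theory.

Module Aux.
Set Implicit Arguments. Unset Strict Implicit. Unset Printing Implicit Defensive.

Fixpoint words (r N : nat) : seq (seq nat) :=
  if N is N'.+1 then [seq x :: w | x <- iota 0 r, w <- words r N'] else [:: [::]].

Lemma mem_words r N w : (w \in words r N) = (size w == N) && all (fun x => x < r) w.
Proof.
elim: N w => [|N IH] w /=; first by case: w.
apply/allpairsP/idP.
  case=> [[x w']] [/= Hx Hw ->]; move: Hx; rewrite mem_iota add0n /= => Hx; move: Hw; rewrite IH /= eqSS => /andP[-> ->]; by rewrite Hx.
case: w => [|x w] //=; rewrite eqSS => /andP[Hs /andP[Hx Ha]].
by exists (x, w); rewrite mem_iota IH Hs Ha Hx.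
Qed.

Lemma uniq_words r N : uniq (words r N).
Proof.
elim: N => [|N IH] //=; apply: allpairs_uniq => //; first exact: iota_uniq.
by move=> [x w] [y v] _ _ /= [-> ->].
Qed.

Lemma sum_reindex_seq (R : nmodType) (A : finType) (P : pred A) (h : A -> seq nat)
   (L : seq (seq nat)) (Q : pred (seq nat)) (G : seq nat -> R) :
  {in P &, injective h} -> (forall a, P a -> (h a \in L) && Q (h a)) ->
  (forall w, w \in L -> Q w -> exists2 a, P a & h a = w) -> uniq L ->
  (\sum_(a | P a) G (h a) = \sum_(w <- L | Q w) G w)%R.
Proof.
move=> inj HPQ HQP uL.
rewrite -big_filter -(big_map h predT G) -[RHS]big_filter.
apply: perm_big; apply: uniq_perm.
- rewrite map_inj_in_uniq ?filter_uniq ?index_enum_uniq //.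
  by move=> a b; rewrite !mem_filter => /andP[Pa _] /andP[Pb _]; apply: inj.
- exact: filter_uniq.
move=> w; rewrite mem_filter; apply/mapP/idP.
  by case=> a; rewrite mem_filter => /andP[Pa _] ->; move: (HPQ a Pa) => /andP[-> ->].
case/andP=> Qw Lw; case: (HQP w Lw Qw) => a Pa <-; exists a => //.
by rewrite mem_filter Pa mem_index_enum.
Qed.


Definition tv (lam : seq nat) (t : filling lam) (i j : nat) : nat :=
  match (insub i : option 'I_(size lam)), (insub j : option 'I_(sumn lam)) with
  | Some a, Some b => val (t (a, b))
  | _, _ => 0 end.

Lemma tvE lam (t : filling lam) (c : cell lam) : tv t c.1 c.2 = t c.
Proof. by case: c => a b; rewrite /tv /= !valK. Qed.

Lemma nth_le_sumn (lam : seq nat) i : nth 0 lam i <= sumn lam.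
Proof. elim: lam i => [|x l IH] [|i] //=; [exact: leq_addr | exact: leq_trans (IH i) (leq_addl _ _)]. Qed.

Lemma in_diag_real lam i j : in_diag lam i j -> (i < size lam) && (j < sumn lam).
Proof.
rewrite /in_diag => h; apply/andP; split; last exact: leq_trans h (nth_le_sumn _ _).
by case: (ltnP i (size lam)) => // hi; rewrite nth_default in h.
Qed.

Lemma tv_out lam (t : filling lam) i j : ~~ ((i < size lam) && (j < sumn lam)) -> tv t i j = 0.
Proof.
rewrite /tv negb_and => /orP[h|h]; first by rewrite insubN.
by case: (insub i) => // a; rewrite insubN.
Qed.

Definition sytF lam (F : nat -> nat -> nat) :=
 [/\ forall i j, in_diag lam i j -> 0 < F i j <= sumn lam,
     forall i j, ~~ in_diag lam i j -> F i j = 0,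
     forall i j i' j', in_diag lam i j -> in_diag lam i' j' -> F i j = F i' j' -> i = i' /\ j = j',
     forall i j, in_diag lam i j.+1 -> F i j < F i j.+1 &
     forall i j, in_diag lam i.+1 j -> F i j < F i.+1 j].

Lemma tv_cell lam (t : filling lam) i j (h : (i < size lam) && (j < sumn lam)) :
  exists c : cell lam, [/\ val c.1 = i, val c.2 = j & tv t i j = t c].
Proof.
case/andP: h => hi hj.
by exists (Ordinal hi, Ordinal hj); split => //; rewrite -tvE.
Qed.

Lemma syt_tv lam (t : filling lam) : is_syt t -> sytF lam (tv t).
Proof.
case/and4P => /forallP H1 /forallP H2 /forallP H3 /forallP H4; split.
- move=> i j h; case: (tv_cell t (in_diag_real h)) => c [e1 e2 ->].
  move: (H1 c); rewrite e1 e2 h => ->; exact: leq_ord.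
- move=> i j h; case: (boolP ((i < size lam) && (j < sumn lam))) => hr; last exact: tv_out.
  case/andP: hr => hi hj; rewrite -[i]/(val (Ordinal hi)) -[j]/(val (Ordinal hj)).
  rewrite -[Ordinal hi]/((Ordinal hi, Ordinal hj).1) -[Ordinal hj]/((Ordinal hi, Ordinal hj).2) tvE.
  by move: (H1 (Ordinal hi, Ordinal hj)); rewrite /= (negbTE h) => /eqP.
- move=> i j i' j' h h' e; case: (tv_cell t (in_diag_real h)) => c [e1 e2 ec]; case: (tv_cell t (in_diag_real h')) => d [f1 f2 ed].
  have etd : t c == t d by rewrite -val_eqE /= -ec -ed e.
  move: (forallP (H2 c) d); rewrite e1 e2 f1 f2 h h' etd /= => /eqP ecd.
  by subst d; rewrite -e1 -f1 -e2 -f2.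
- move=> i j h; have h0 : in_diag lam i j by rewrite /in_diag ltnW.
  case: (tv_cell t (in_diag_real h0)) => c [e1 e2 ->]; case: (tv_cell t (in_diag_real h)) => d [f1 f2 ->].
  by move: (forallP (H3 c) d); rewrite e1 e2 f1 f2 h !eqxx.
- move=> i j h; case/andP: (in_diag_real h) => hi hj.
  have hr : (i < size lam) && (j < sumn lam) by rewrite hj andbT ltnW.
  case: (tv_cell t hr) => c [e1 e2 ->]; case: (tv_cell t (in_diag_real h)) => d [f1 f2 ->].
  by move: (forallP (H4 c) d); rewrite e1 e2 f1 f2 h !eqxx.
Qed.


Definition mkT lam (F : nat -> nat -> nat) : filling lam :=
  [ffun c : cell lam => inord (F (val c.1) (val c.2))].

Lemma mkT_tv lam F : sytF lam F -> forall i j, tv (mkT lam F) i j = F i j.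
Proof.
case=> Hb Ho _ _ _ i j.
case: (boolP ((i < size lam) && (j < sumn lam))) => hr; last first.
  rewrite tv_out // Ho //; apply: contra hr; exact: in_diag_real.
case: (tv_cell (mkT lam F) hr) => c [e1 e2 ->]; rewrite ffunE inordK e1 e2 //.
case: (boolP (in_diag lam i j)) => h; first by case/andP: (Hb _ _ h).
by rewrite Ho.
Qed.

Lemma syt_mkT lam F : sytF lam F -> is_syt (mkT lam F).
Proof.
move=> HF; have E (c : cell lam) : val (mkT lam F c) = F c.1 c.2 by rewrite -(mkT_tv HF) tvE.
have E' (c : cell lam) : nat_of_ord (mkT lam F c) = F c.1 c.2 by rewrite -(mkT_tv HF) tvE.
case: HF => Hb Ho Hi Hr Hc.
apply/and4P; split; apply/forallP => c.
- rewrite ?E ?E'; case: ifP => h; first by case/andP: (Hb _ _ h).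
  by rewrite Ho ?h.
- apply/forallP => d; apply/implyP => /and3P[h1 h2 e].
  move: e; rewrite -val_eqE /= ?E ?E' => /eqP e.
  case: (Hi _ _ _ _ h1 h2 e) => e1 e2.
  by case: c d e1 e2 {h1 h2 e} => [a b] [a' b'] /= /val_inj -> /val_inj ->.
- apply/forallP => d; apply/implyP => /and3P[h /eqP e1 /eqP e2].
  by rewrite ?E ?E' -e2 -e1 Hr // e1 e2.
- apply/forallP => d; apply/implyP => /and3P[h /eqP e1 /eqP e2].
  by rewrite ?E ?E' -e2 -e1 Hc // e1 e2.
Qed.

Lemma rowofE lam (t : filling lam) i j :
  sytF lam (tv t) -> in_diag lam i j -> rowof t (tv t i j) = i.
Proof.
case=> Hb Ho Hi _ _ h; rewrite /rowof; case: pickP => [c /eqP Hc | H].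
  have hc : in_diag lam c.1 c.2.
    apply: contraT => hn; move: (Ho _ _ hn); rewrite tvE Hc => e.
    by move: (Hb _ _ h); rewrite e.
  have e : tv t c.1 c.2 = tv t i j by rewrite tvE Hc.
  by case: (Hi _ _ _ _ hc h e).
case: (tv_cell t (in_diag_real h)) => c [_ _ e].
by move: (H c); rewrite e eqxx.
Qed.

Lemma sytF_surj lam F m : sytF lam F -> 0 < m <= sumn lam ->
  exists i j, in_diag lam i j /\ F i j = m.
Proof.
case=> Hb Ho Hi _ _ hm.
pose D := [seq (i, j) | i <- iota 0 (size lam), j <- iota 0 (nth 0 lam i)].
have HD p : p \in D -> in_diag lam p.1 p.2.
  by case/allpairsPdep => i [j [_ + ->]]; rewrite mem_iota /in_diag.
have uD : uniq D.
  apply: allpairs_uniq_dep; first exact: iota_uniq.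
    move=> i _; exact: iota_uniq.
  by move=> [x y] [x' y'] _ _ /= [e1 e2]; subst.
have sD : size D = sumn lam.
  rewrite size_allpairs_dep.
  have -> : [seq size (iota 0 (nth 0 lam i)) | i <- iota 0 (size lam)] = lam.
    by rewrite (eq_map (fun i => size_iota _ _)) -/(mkseq _ _) mkseq_nth.
  by [].
pose s1 := [seq F p.1 p.2 | p <- D].
have u1 : uniq s1.
  rewrite map_inj_in_uniq // => [[a b] [a' b']] ha hb /= e.
  by case: (Hi _ _ _ _ (HD _ ha) (HD _ hb) e) => /= -> ->.
have sub : {subset s1 <= iota 1 (sumn lam)}.
  move=> x /mapP [p hp ->]; case/andP: (Hb _ _ (HD _ hp)) => h1 h2; by rewrite mem_iota h1 add1n ltnS h2.
have hsz : size (iota 1 (sumn lam)) <= size s1 by rewrite size_iota size_map sD.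
have [_ eq1] := uniq_min_size u1 sub hsz.
have : m \in s1 by rewrite eq1 mem_iota; lia.
by case/mapP => [[i j]] hp ->; exists i, j; split => //; exact: (HD _ hp).
Qed.


Definition word lam (t : filling lam) : seq nat := [seq rowof t m | m <- iota 1 (sumn lam)].

Definition cntF lam (F : nat -> nat -> nat) i k := count (fun j => F i j <= k) (iota 0 (nth 0 lam i)).

Lemma count_mem_uniq (a b : seq nat) : uniq a -> uniq b -> count (mem b) a = count (mem a) b.
Proof.
move=> ua ub; rewrite -!size_filter; apply: perm_size; apply: uniq_perm; rewrite ?filter_uniq //.
by move=> x; rewrite !mem_filter andbC.
Qed.

Lemma count_take_word lam (t : filling lam) i k : is_syt t ->
  count_mem i (take k (word t)) = cntF lam (tv t) i k.
Proof.
move=> /syt_tv HF; have HF' := HF; case: HF' => Hb Ho Hi _ _.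
rewrite /word -map_take take_iota count_map.
set K := minn k (sumn lam).
pose Ri := [seq tv t i j | j <- iota 0 (nth 0 lam i)].
have uR : uniq Ri.
  rewrite map_inj_in_uniq ?iota_uniq // => j j'; rewrite !mem_iota /= => hj hj' e.
  by case: (Hi i j i j' hj hj' e).
transitivity (count (mem Ri) (iota 1 K)).
  apply: eq_in_count => m; rewrite mem_iota => hm.
  have hm' : 0 < m <= sumn lam by apply/andP; split; [case/andP: hm | move: hm; rewrite /K; lia].
  case: (sytF_surj HF hm') => i' [j' [hd <-]].
  rewrite /= (rowofE HF hd); apply/eqP/idP.
    by move=> e; subst i'; apply/mapP; exists j' => //; rewrite mem_iota add0n; exact: hd.
  by case/mapP => j''; rewrite mem_iota /= => hj e; case: (Hi _ _ _ _ hd hj e).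
rewrite count_mem_uniq ?iota_uniq // count_map /cntF; apply: eq_in_count => j.
rewrite mem_iota /= => hj; have := Hb _ _ hj; rewrite mem_iota /K.
move: (tv t i j) => v; case/andP=> h1 h2; rewrite h1 add1n ltnS /=.
by rewrite leq_min h2 andbT.

Qed.

Lemma row_mono lam F i j j' : sytF lam F -> in_diag lam i j' -> j < j' -> F i j < F i j'.
Proof.
case=> _ _ _ Hr _ hd; elim: j' hd => [|j' IH] // hd.
rewrite ltnS leq_eqVlt => /orP[/eqP -> | hj]; first exact: Hr.
apply: ltn_trans (IH _ hj) (Hr _ _ hd); rewrite /in_diag; exact: ltnW hd.
Qed.

Lemma cnt_char lam F i j k : sytF lam F -> in_diag lam i j ->
  (j < cntF lam F i k) = (F i j <= k).
Proof.
move=> HF hd; rewrite /cntF.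
have E : nth 0 lam i = j.+1 + (nth 0 lam i - j.+1) by rewrite subnKC.
rewrite E iotaD count_cat add0n.
case: (leqP (F i j) k) => hk.
  have -> : count (fun j0 => F i j0 <= k) (iota 0 j.+1) = j.+1.
    rewrite -[RHS](size_iota 0 j.+1) -count_predT; apply: eq_in_count => j'.
    rewrite mem_iota /= ltnS => hj'; rewrite leq_eqVlt in hj'.
    case/orP: hj' => [/eqP -> //|hj']; apply: leq_trans hk; apply: ltnW; apply: row_mono HF hd hj'.
  exact: leq_addr.
have -> : count (fun j0 => F i j0 <= k) (iota j.+1 (nth 0 lam i - j.+1)) = 0.
  apply/eqP; rewrite -leqn0 leqNgt -has_count; apply/hasP => [[j']]; rewrite mem_iota => hj' /=.
  have hd' : in_diag lam i j' by rewrite /in_diag E; case/andP: hj' => _; rewrite addnC.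
  by move=> h; have := ltn_trans (leq_ltn_trans h hk) (row_mono HF hd' (proj1 (andP hj'))); rewrite ltnn.
have hk' : (F i j <= k) = false by rewrite leqNgt hk.
rewrite addn0; apply/negbTE; rewrite -leqNgt -addn1 iotaD count_cat /= add0n hk' !addn0.
by have := count_size (fun j0 => F i j0 <= k) (iota 0 j); rewrite size_iota.
Qed.


Definition Q lam (w : seq nat) : bool :=
  [&& size w == sumn lam, all (fun x => x < size lam) w,
      all (fun i => count_mem i w == nth 0 lam i) (iota 0 (size lam)) &
      all (fun k => all (fun i => count_mem i.+1 (take k w) <= count_mem i (take k w))
                         (iota 0 (size lam))) (iota 0 (size w).+1)].

Lemma QP lam w : reflect
  [/\ size w = sumn lam, forall x, x \in w -> x < size lam,
      forall i, count_mem i w = nth 0 lam i &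
      forall k i, i < size lam -> count_mem i.+1 (take k w) <= count_mem i (take k w)]
  (Q lam w).
Proof.
apply: (iffP and4P) => [[/eqP h1 /allP h2 /allP h3 /allP h4] | [h1 h2 h3 h4]]; split.
- exact h1.
- exact h2.
- move=> i; case: (ltnP i (size lam)) => hi.
    by apply/eqP; apply: h3; rewrite mem_iota.
  rewrite nth_default //; apply/count_memPn; apply/negP => hw; by move: (h2 _ hw); rewrite ltnNge hi.
- move=> k i hi; case: (leqP k (size w)) => hk.
    have hk' : k \in iota 0 (size w).+1 by rewrite mem_iota.
    by have /allP := h4 k hk'; apply; rewrite mem_iota.
  rewrite take_oversize ?(ltnW hk) //.
  have hk' : size w \in iota 0 (size w).+1 by rewrite mem_iota add0n ltnSn.
  by have /allP := h4 (size w) hk'; rewrite take_size; apply; rewrite mem_iota.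
- by rewrite h1.
- exact/allP.
- by apply/allP => i _; rewrite h3.
- by apply/allP => k _; apply/allP => i; rewrite mem_iota => /= hi; apply: h4.
Qed.

Lemma count_sub_in (T : eqType) (a b : pred T) (s : seq T) :
  {in s, forall x, a x -> b x} -> count a s <= count b s.
Proof.
elim: s => [|x s IH] //= h; apply: leq_add; last by apply: IH => y hy; apply: h; rewrite inE hy orbT.
by case: (boolP (a x)) => //= ha; rewrite h // inE eqxx.
Qed.

Lemma part_nth lam i : is_partition lam -> nth 0 lam i.+1 <= nth 0 lam i.
Proof.
move=> /(sortedP 0) h; case: (ltnP i.+1 (size lam)) => hi; first exact: h.
by rewrite nth_default.
Qed.

Lemma word_Q lam (t : filling lam) : is_partition lam -> is_syt t -> Q lam (word t).
Proof.
move=> hp ht; have HF := syt_tv ht; have HF' := HF; case: HF' => Hb Ho Hi Hr Hc.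
have cw i : count_mem i (word t) = cntF lam (tv t) i (sumn lam).
  by rewrite -(count_take_word _ _ ht) take_oversize // size_map size_iota.
apply/QP; split.
- by rewrite size_map size_iota.
- move=> x /mapP [m]; rewrite mem_iota => hm ->.
  have hm' : 0 < m <= sumn lam by move: hm; rewrite add1n ltnS.
  case: (sytF_surj HF hm') => i [j [hd <-]]; rewrite (rowofE HF hd).
  by case/andP: (in_diag_real hd).
- move=> i; rewrite cw /cntF -[RHS](size_iota 0) -count_predT; apply: eq_in_count => j.
  by rewrite mem_iota /= => hj; case/andP: (Hb _ _ hj).
- move=> k i hi; rewrite !count_take_word // /cntF.
  have hl := part_nth i hp.
  apply: (@leq_trans (count (fun j => tv t i j <= k) (iota 0 (nth 0 lam i.+1)))).
    apply: count_sub_in => j; rewrite mem_iota /= => hj h.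
    exact: leq_trans (ltnW (Hc _ _ hj)) h.
  rewrite -(subnKC hl) iotaD count_cat; exact: leq_addr.
Qed.


Lemma count_take_mono (T : eqType) (a : pred T) (w : seq T) k k' :
  k <= k' -> count a (take k w) <= count a (take k' w).
Proof.
move=> h; rewrite -(take_takel w h) -{2}(cat_take_drop k (take k' w)) count_cat; exact: leq_addr.
Qed.

Definition occ (w : seq nat) i j :=
  find (fun k => j < count_mem i (take k w)) (iota 0 (size w).+1).

Lemma occP w i j : j < count_mem i w ->
  forall k, (occ w i j <= k) = (j < count_mem i (take k w)).
Proof.
move=> hj k; set p := fun k => j < count_mem i (take k w).
have hs : has p (iota 0 (size w).+1).
  by apply/hasP; exists (size w); rewrite ?mem_iota ?add0n ?ltnSn // /p take_size.
have ho : occ w i j < (size w).+1 by rewrite -[X in _ < X](size_iota 0) -has_find.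
have po : p (occ w i j).
  by have := nth_find 0 hs; rewrite nth_iota // add0n.
case: (leqP (occ w i j) k) => hk.
  by apply/esym; apply: leq_trans po _; apply: count_take_mono.
apply/esym/negbTE; case: (ltnP k (size w).+1) => hk'.
  by have := before_find 0 hk; rewrite nth_iota // add0n => ->.
by move: hk; rewrite ltnNge (ltnW (leq_trans ho hk')).
Qed.

Lemma occ_pos w p : p < size w ->
  occ w (nth 0 w p) (count_mem (nth 0 w p) (take p w)) = p.+1.
Proof.
move=> hp; set i := nth 0 w p; set j := count_mem i (take p w).
have e1 : count_mem i (take p.+1 w) = j.+1.
  by rewrite (take_nth 0 hp) -cats1 count_cat /= /i eqxx addn0 addn1.
have hj : j < count_mem i w.
  rewrite -e1 -{2}(cat_take_drop p.+1 w) count_cat; exact: leq_addr.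
apply/eqP; rewrite eqn_leq (occP hj) e1 ltnSn /= ltnNge (occP hj) /j ltnn //.
Qed.

Lemma occ_inv w i j : j < count_mem i w ->
  [/\ 0 < occ w i j <= size w, nth 0 w (occ w i j).-1 = i &
      count_mem i (take (occ w i j).-1 w) = j].
Proof.
move=> hj; have P1 := occP hj 0; rewrite take0 /= ltn0 in P1.
have P2 := occP hj (size w); rewrite take_size hj in P2.
have hpos : 0 < occ w i j by rewrite ltnNge P1.
set o := occ w i j in hpos P1 P2 *.
have ho : o.-1 < size w by rewrite prednK.
have P3 := occP hj o.-1; rewrite -[o in o <= _](prednK hpos) ltnn in P3.
have P4 := occP hj o; rewrite leqnn in P4.
move: P4; rewrite -{1}(prednK hpos) (take_nth 0 ho) -cats1 count_cat /= addn0.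
have := P3; move/esym/negbT; rewrite -leqNgt => P3'.
case: eqP => [e | _]; last by rewrite addn0 ltnNge P3'.
rewrite addn1 ltnS => h; split => //; first by rewrite hpos P2.
  by apply/eqP; rewrite eqn_leq -h P3'.
Qed.


Lemma word_inj lam (t1 t2 : filling lam) : is_syt t1 -> is_syt t2 -> word t1 = word t2 -> t1 = t2.
Proof.
move=> h1 h2 e.
have HF1 := syt_tv h1; have HF2 := syt_tv h2.
have E i j : tv t1 i j = tv t2 i j.
  case: (boolP (in_diag lam i j)) => hd; last first.
    by case: HF1 => _ Ho1 _ _ _; case: HF2 => _ Ho2 _ _ _; rewrite Ho1 // Ho2.
  have K k : (tv t1 i j <= k) = (tv t2 i j <= k).
    by rewrite -(cnt_char _ HF1 hd) -(cnt_char _ HF2 hd) -!count_take_word // e.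
  by apply/eqP; rewrite eqn_leq K leqnn -K leqnn.
apply/ffunP => c; apply: val_inj; have := E c.1 c.2; rewrite !tvE; exact.
Qed.

Lemma Q_word lam w : Q lam w -> exists2 t : filling lam, is_syt t & word t = w.
Proof.
case/QP => hs ha hc hb.
pose F i j := if in_diag lam i j then occ w i j else 0.
have hdc i j : in_diag lam i j -> j < count_mem i w by rewrite hc.
have HF : sytF lam F.
  split.
  - move=> i j hd; rewrite /F hd; case: (occ_inv (hdc _ _ hd)) => /andP[-> h] _ _.
    by rewrite -hs.
  - by move=> i j hd; rewrite /F (negbTE hd).
  - move=> i j i' j' hd hd'; rewrite /F hd hd' => e.
    case: (occ_inv (hdc _ _ hd)) => _ e1 e2; case: (occ_inv (hdc _ _ hd')) => _ e1' e2'.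
    have ei : i = i' by rewrite -e1 -e1' e.
    by subst i'; split => //; rewrite -e2 -e2' e.
  - move=> i j hd; have hd0 : in_diag lam i j by rewrite /in_diag ltnW.
    rewrite /F hd hd0.
    case: (occ_inv (hdc _ _ hd)) => /andP[hp _] _ e2.
    have : occ w i j <= (occ w i j.+1).-1 by rewrite (occP (hdc _ _ hd0)) e2.
    by rewrite -ltnS prednK.
  - move=> i j hd; rewrite /F hd; case: (boolP (in_diag lam i j)) => hd0; last first.
      by case: (occ_inv (hdc _ _ hd)) => /andP[].
    case: (occ_inv (hdc _ _ hd)) => /andP[hp hle] e1 e2.
    have hi : i < size lam by case/andP: (in_diag_real hd) => /ltnW.
    have hv : j < count_mem i (take (occ w i.+1 j) w).
      apply: leq_trans (hb _ _ hi).
      have ho : (occ w i.+1 j).-1 < size w by rewrite prednK.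
      by rewrite -(prednK hp) (take_nth 0 ho) -cats1 count_cat /= e1 eqxx e2 addn0 addn1.
    rewrite ltn_neqAle (occP (hdc _ _ hd0)) hv andbT.
    apply/negP => /eqP e; case: (occ_inv (hdc _ _ hd0)) => _ f1 _.
    by move: f1; rewrite e e1 => /esym h; exact: n_Sn h.
exists (mkT lam F); first exact: syt_mkT.
have HT := syt_tv (syt_mkT HF).
apply: (@eq_from_nth _ 0); first by rewrite size_map size_iota hs.
rewrite size_map size_iota => p hp.
rewrite (nth_map 0) ?size_iota // nth_iota // add1n.
have hp' : p < size w by rewrite hs.
set i := nth 0 w p; set j := count_mem i (take p w).
have e1 : count_mem i (take p.+1 w) = j.+1.
  by rewrite (take_nth 0 hp') -cats1 count_cat /= /i eqxx addn0 addn1.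
have hd : in_diag lam i j.
  by rewrite /in_diag -hc -e1 -{2}(cat_take_drop p.+1 w) count_cat leq_addr.
have ev : tv (mkT lam F) i j = p.+1 by rewrite mkT_tv // /F hd occ_pos.
by rewrite -ev (rowofE HT hd).
Qed.


Fixpoint dsc (x : nat) (w : seq nat) : nat :=
  if w is y :: w' then (x < y) + dsc y w' else 0.
Fixpoint mj (k x : nat) (w : seq nat) : nat :=
  if w is y :: w' then (if x < y then k else 0) + mj k.+1 y w' else 0.
Definition wdes (w : seq nat) := if w is x :: w' then dsc x w' else 0.
Definition wmaj (w : seq nat) := if w is x :: w' then mj 1 x w' else 0.

Lemma sum_dsc (f : nat -> nat) a n :
  \sum_(a <= m < a + n | f m < f m.+1) 1 = dsc (f a) (map f (iota a.+1 n)).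
Proof.
elim: n a => [|n IH] a; first by rewrite addn0 big_geq.
rewrite big_ltn_cond; last by rewrite addnS ltnS leq_addr.
rewrite addnS -addSn IH /=.
by case: (f a < f a.+1).
Qed.

Lemma sum_mj (f : nat -> nat) a n :
  \sum_(a <= m < a + n | f m < f m.+1) m = mj a (f a) (map f (iota a.+1 n)).
Proof.
elim: n a => [|n IH] a; first by rewrite addn0 big_geq.
rewrite big_ltn_cond; last by rewrite addnS ltnS leq_addr.
rewrite addnS -addSn IH /=.
by case: (f a < f a.+1).
Qed.

Lemma des_word lam (t : filling lam) : des t = wdes (word t).
Proof.
rewrite /des /word; case: (sumn lam) => [|n]; first by rewrite big_geq.
by rewrite -add1n sum_dsc.
Qed.

Lemma maj_word lam (t : filling lam) : maj t = wmaj (word t).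
Proof.
rewrite /maj /word; case: (sumn lam) => [|n]; first by rewrite big_geq.
by rewrite -add1n sum_mj.
Qed.

Lemma TW lam (G : seq nat -> {poly int}) : is_partition lam ->
  (\sum_(t : filling lam | is_syt t) G (word t) =
   \sum_(w <- words (size lam) (sumn lam) | Q lam w) G w)%R.
Proof.
move=> hp; apply: sum_reindex_seq; last exact: uniq_words.
- move=> t1 t2 h1 h2; exact: word_inj.
- move=> t ht; have hq := word_Q hp ht; rewrite hq andbT mem_words.
  by case/QP: hq => -> ha _ _; rewrite eqxx; apply/allP.
- by move=> w _ hq; case: (Q_word hq) => t ht <-; exists t.
Qed.

Definition Wsum lam i : {poly int} :=
  (\sum_(w <- words (size lam) (sumn lam) | Q lam w && (wdes w == i)) 'X^(wmaj w))%R.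

Lemma Q_part lam w : Q lam w -> is_partition lam.
Proof.
case/QP => hs ha hc hb; apply/(sortedP 0) => i hi.
rewrite /= -!hc; have := hb (size w) i (ltnW hi); rewrite take_size //.
Qed.

Lemma fpolyW lam i : fpoly lam i = Wsum lam i.
Proof.
rewrite /fpoly /Wsum; case: ifP => hp.
  rewrite big_mkcondr [RHS]big_mkcondr.
  rewrite (eq_bigr (fun t => (fun w => if wdes w == i then 'X^(wmaj w) else 0) (word t))%R); last first.
    by move=> t _; rewrite des_word maj_word.
  exact: TW.
apply/esym; rewrite big_seq_cond big1 // => w /andP[_ /andP[hq _]].
by move: hp; rewrite (Q_part hq).
Qed.


Fixpoint sfx (w : seq nat) : seq nat :=
  if w is x :: w' then (if 0 \in w' then sfx w' else w) else [::].
Fixpoint pfx (w : seq nat) : seq nat :=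
  if w is x :: w' then (if 0 \in w' then x :: pfx w' else [::]) else [::].

Lemma pfx_sfx w : pfx w ++ sfx w = w.
Proof. by elim: w => [|x w IH] //=; case: ifP => _ //=; rewrite IH. Qed.

Lemma sfx_cat u v : 0 \notin v -> sfx (u ++ 0 :: v) = 0 :: v /\ pfx (u ++ 0 :: v) = u.
Proof.
move=> hv; elim: u => [|x u [IH1 IH2]] /=; first by rewrite (negbTE hv).
by rewrite mem_cat inE eqxx orbT IH1 IH2.
Qed.

Lemma sfx_shape w : 0 \in w -> exists v, sfx w = 0 :: v /\ 0 \notin v.
Proof.
elim: w => [|x w IH] //=; case: ifP => [h _|h]; first exact: IH.
by rewrite inE => /orP[/eqP <-|]; [exists w; rewrite h | rewrite h].
Qed.

Lemma dsc_count x w : dsc x w + count_mem 0 w <= size w.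
Proof.
elim: w x => [|y w IH] x //=.
have := IH y; case: (ltnP x y) => h; case: eqP => e /=; lia.
Qed.

Lemma dsc_sorted x w : dsc x w + count_mem 0 w = size w -> sorted ltn (sfx (x :: w)).
Proof.
elim: w x => [|y w IH] x //= E.
have h1 := dsc_count y w.
have h2 : dsc y w + count_mem 0 w = size w.
  by move: E h1; case: (ltnP x y) => h; case: (y =P 0) => e /=; lia.
have IH' := IH y h2.
rewrite inE; case: eqP => [e|ne] /=.
  by move: IH'; rewrite /= -e.
case: ifP => hw; first by move: IH'; rewrite /= hw.
move: IH'; rewrite /= hw /= => ->; rewrite andbT.
by move: E h1; case: (ltnP x y) => h; case: eqP => e //=; try lia.
Qed.

Lemma dsc_cat x u v : dsc x (u ++ v) = dsc x u + dsc (last x u) v.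
Proof. by elim: u x => [|y u IH] x //=; rewrite IH addnA. Qed.

Lemma mj_cat k x u v : mj k x (u ++ v) = mj k x u + mj (k + size u) (last x u) v.
Proof. by elim: u k x => [|y u IH] k x /=; rewrite ?addn0 // IH addnA addSnnS. Qed.

Lemma chain_dsc x v : path ltn x v -> dsc x v = size v.
Proof. by elim: v x => [|y v IH] x //= /andP[-> h]; rewrite IH. Qed.

Lemma chain_mj k x v : path ltn x v -> mj k x v = \sum_(j < size v) (k + j).
Proof.
elim: v k x => [|y v IH] k x /=; first by rewrite big_ord0.
case/andP=> -> h; rewrite IH // big_ord_recl /= addn0; congr (_ + _).
by apply: eq_bigr => j _; rewrite /bump /= add1n addSnnS.
Qed.

Lemma wdes_cat u v : path ltn 0 v -> wdes (u ++ 0 :: v) = wdes u + size v.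
Proof.
move=> h; case: u => [|x u] /=; first exact: chain_dsc.
by rewrite dsc_cat /= add0n (chain_dsc h).
Qed.

Lemma wmaj_cat u v : path ltn 0 v ->
  wmaj (u ++ 0 :: v) = wmaj u + \sum_(j < size v) ((size u).+1 + j).
Proof.
move=> h; case: u => [|x u] /=; first by rewrite chain_mj.
by rewrite mj_cat /= add0n (chain_mj _ h) add1n.
Qed.

Lemma sum_id a s : \sum_(j < s) (a.+1 + j) = s * (a.+1 + s) - 'C(s.+1, 2).
Proof.
suff: \sum_(j < s) (a.+1 + j) + 'C(s.+1, 2) = s * (a.+1 + s) by lia.
elim: s => [|s IH]; first by rewrite big_ord0.
rewrite big_ord_recr /= binS bin1.
move: IH; set S := \sum_(_ < _) _; set C := 'C(_, _); lia.
Qed.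


Definition inS r (S : {set 'I_r}) (i : nat) : bool := [exists x in S, val x == i].
Definition TS r (S : {set 'I_r}) := fun i : nat => (i == 0) || [exists x in S, val x == i].
Definition vS r (S : {set 'I_r}) := [seq i <- iota 1 r.-1 | inS S i].
Definition gS r (w : seq nat) : {set 'I_r} := [set i : 'I_r | val i \in behead (sfx w)].

Lemma inS_lt r (S : {set 'I_r}) i : inS S i -> i < r.
Proof. by case/existsP => x /andP[_ /eqP <-]; exact: ltn_ord. Qed.

Lemma inS_ord r (S : {set 'I_r}) (x : 'I_r) : inS S x = (x \in S).
Proof.
apply/existsP/idP => [[y /andP[hy /eqP e]]|hx]; last by exists x; rewrite hx eqxx.
by move/val_inj: e => <-.
Qed.

Lemma filter_TS r (S : {set 'I_r}) : 0 < r -> [seq i <- iota 0 r | TS S i] = 0 :: vS S.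
Proof.
case: r S => [|r] S // _; rewrite /= /vS /=; congr (_ :: _).
apply: eq_in_filter => i; rewrite mem_iota => /andP[h _].
by rewrite /TS /inS; case: i h.
Qed.

Lemma path_vS r (S : {set 'I_r}) : 0 < r -> path ltn 0 (vS S).
Proof.
move=> hr; have := sorted_filter ltn_trans (TS S) (iota_ltn_sorted 0 r).
by rewrite filter_TS.
Qed.

Lemma mem_vS r (S : {set 'I_r}) i : (i \in vS S) = (0 < i) && inS S i.
Proof.
rewrite mem_filter mem_iota andbC; case hi: (inS S i); rewrite ?andbF ?andbT //.
have h := inS_lt hi; have hr : 0 < r by apply: leq_ltn_trans (leq0n i) h.
apply/idP/idP => [/andP[]//|hp]; by rewrite hp /= add1n prednK.
Qed.

Lemma size_vS r (S : {set 'I_r}) : [forall i in S, 0 < val i] -> size (vS S) = #|S|.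
Proof.
move=> /forall_inP Hs.
have h0 : inS S 0 = false.
  by apply/negbTE/existsP => [[x /andP[hx /eqP e]]]; move: (Hs x hx); rewrite e.
rewrite size_filter.
transitivity (count (inS S) (iota 0 r)).
  by case: r S Hs h0 => [|r] S Hs h0 //=; rewrite h0.
have -> : iota 0 r = index_iota 0 r by rewrite /index_iota subn0.
rewrite -sum1_count big_mkord -sum1_card.
by apply: eq_bigl => x; rewrite inS_ord.
Qed.

Lemma count_s r (S : {set 'I_r}) i : 0 < r -> count_mem i (0 :: vS S) = TS S i.
Proof.
move=> hr; have hs := path_vS S hr.
have u : uniq (0 :: vS S).
  apply: sorted_uniq; [exact: ltn_trans | exact: ltnn | exact: hs].
rewrite count_uniq_mem // inE mem_vS /TS -/(inS S i).
by case: i.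
Qed.

Lemma nth_lower lam T i : nth 0 (lower lam T) i = nth 0 lam i - T i.
Proof.
rewrite /lower; case: (ltnP i (size lam)) => hi.
  by rewrite (nth_map 0) ?size_iota // nth_iota.
by rewrite !nth_default ?size_map ?size_iota.
Qed.

Lemma size_lower lam T : size (lower lam T) = size lam.
Proof. by rewrite size_map size_iota. Qed.

Lemma sumn_sub (f : nat -> nat) (T : pred nat) s :
  (forall i, i \in s -> T i -> 0 < f i) ->
  sumn [seq f i - T i | i <- s] + count T s = sumn (map f s).
Proof.
elim: s => [|a s IH] //= h.
have h' : forall i, i \in s -> T i -> 0 < f i by move=> i hi; apply: h; rewrite inE hi orbT.
have := IH h'; have := h a (mem_head _ _).
case: (T a) => /= ha; lia.
Qed.

Lemma sumn_lower lam (T : pred nat) : (forall i, i < size lam -> T i -> 0 < nth 0 lam i) ->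
  sumn (lower lam T) + count T (iota 0 (size lam)) = sumn lam.
Proof.
move=> h; rewrite /lower sumn_sub.
  by rewrite -/(mkseq _ _) mkseq_nth.
by move=> i; rewrite mem_iota => /andP[_ hi]; apply: h.
Qed.

Lemma sumn_ge_size s : all (fun x => 0 < x) s -> size s <= sumn s.
Proof. elim: s => [|x s IH] //= /andP[hx hs]; have := IH hs; lia. Qed.

Lemma pfx_sorted_ltn (s : seq nat) k x y : sorted ltn s -> y \in take k s -> x \in s -> x < y ->
  x \in take k s.
Proof.
elim: s k => [|a s IH] [|k] //= hs; rewrite !inE => hy hx hxy.
case: (x =P a) => [-> //| nxa]; move: hx; rewrite (introF eqP nxa) /= => hx.
have hpa := order_path_min ltn_trans hs.
case: (y =P a) => [e|nya].
  by move/allP: hpa => /(_ x hx); rewrite -e ltnNge (ltnW hxy).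
move: hy; rewrite (introF eqP nya) /= => hy.
exact: (IH k (path_sorted hs) hy hx hxy).
Qed.

Lemma take_min_cat (u v : seq nat) k : take k u = take (minn k (size u)) (u ++ v).
Proof.
rewrite take_cat; case: (ltnP k (size u)) => hk.
  by rewrite hk.
by rewrite ltnn subnn take0 cats0 take_oversize.
Qed.


Lemma block lam (S : {set 'I_(size lam)}) :
  is_partition lam -> all (fun x => 0 < x) lam -> 0 < size lam -> [forall i in S, 0 < val i] ->
  (\sum_(w <- words (size lam) (sumn lam) |
          (Q lam w && (wdes w == sumn lam - nth 0 lam 0)%N) && (S == gS (size lam) w)) 'X^(wmaj w)
   = 'X^(#|S| * sumn lam - 'C(#|S|.+1, 2)) *
     Wsum (lower lam (TS S)) (sumn lam - nth 0 lam 0 - #|S|)%N)%R.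
Proof.
move=> hp hpos hr Hs.
have hpath : path ltn 0 (vS S) := path_vS S hr.
have hsv : size (vS S) = #|S| := size_vS Hs.
have hcnt i : count_mem i (0 :: vS S) = TS S i := count_s S i hr.
have us : uniq (0 :: vS S) by apply: sorted_uniq; [exact: ltn_trans | exact: ltnn | exact: hpath].
have hmem i : (i \in 0 :: vS S) = TS S i.
  by have := hcnt i; rewrite count_uniq_mem //; case: (_ \in _); case: (TS S i).
have hposi i : i < size lam -> 0 < nth 0 lam i by move: i; apply/all_nthP.
have hTSr i : TS S i -> i < size lam.
  by case/orP => [/eqP -> //|]; exact: inS_lt.
have hsum : sumn (lower lam (TS S)) + #|S|.+1 = sumn lam.
  have hsl : sumn (lower lam (TS S)) + count (TS S) (iota 0 (size lam)) = sumn lam.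
    by apply: sumn_lower => i hi _; apply: hposi.
  by rewrite -hsl -size_filter filter_TS //= hsv.
have hl0 : 0 < nth 0 lam 0 := hposi 0 hr.
have hm : #|S| <= sumn lam - nth 0 lam 0.
  rewrite -hsv; case: lam hp hpos hr S Hs {hpath hsv hcnt us hmem hposi hTSr hsum hl0} => [|l0 lt] //= _ /andP[_ hpt] _ S _.
  rewrite addKn; apply: leq_trans (sumn_ge_size hpt).
  by rewrite size_filter; apply: leq_trans (count_size _ _) _; rewrite size_iota.
have hnth i : nth 0 (lower lam (TS S)) i = nth 0 lam i - TS S i := nth_lower lam (TS S) i.
rewrite /Wsum size_lower mulr_sumr -[LHS]big_filter -[RHS]big_filter.
set L' := [seq _ <- words _ (sumn (lower lam (TS S))) | _].
have -> : (\sum_(w' <- L') ('X^(#|S| * sumn lam - 'C(#|S|.+1, 2)) : {poly int}) * 'X^(wmaj w') =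
           \sum_(w <- [seq w' ++ 0%N :: vS S | w' <- L']) 'X^(wmaj w))%R.
  rewrite big_map; apply: eq_big_seq => w'; rewrite mem_filter mem_words => /andP[_ /andP[/eqP hs' _]].
  rewrite wmaj_cat // hsv sum_id exprD mulrC; congr (_ * 'X^(_ - _))%R.
  by rewrite hs' -hsum addSn addnS.
apply: perm_big; apply: uniq_perm.
- exact/filter_uniq/uniq_words.
- rewrite map_inj_uniq; first exact/filter_uniq/uniq_words.
  move=> a b e; have hs' : size a = size b.
    by move: (congr1 size e); rewrite !size_cat => /eqP; rewrite eqn_add2r => /eqP.
  by move/eqP: e; rewrite eqseq_cat // => /andP[/eqP].
move=> w; rewrite mem_filter; apply/idP/mapP.
- case/andP => /andP[/andP[hq /eqP hd] /eqP hg] hw.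
  have hq0 := hq; case/QP: hq0 => hsz hall hc hb.
  have c0 := hc 0.
  have h0w : 0 \in w.
    apply: contraT => /count_memPn h; by move: c0; rewrite h => e; move: hl0; rewrite -e.
  have hsrt : sorted ltn (sfx w).
    have hl0n := nth_le_sumn lam 0.
    move: hsz c0 hd; case: (w) => [|x w1] /=.
      by move=> e; move: hl0n hl0; rewrite -e; case: (nth 0 lam 0).
    move=> [hs1] hc1 hd1; apply: dsc_sorted.
    have := dsc_count x w1; move: hc1; case: (x =P 0) => _ /=; lia.
  case: (sfx_shape h0w) => v' [hsf hv'].
  have hv'v : v' = vS S.
    apply: (irr_sorted_eq ltn_trans ltnn).
    - by move: hsrt; rewrite hsf /= => /path_sorted.
    - exact: path_sorted hpath.
    move=> i; rewrite mem_vS; apply/idP/idP.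
    + move=> hi.
      have hiw : i \in w by rewrite -(pfx_sfx w) mem_cat hsf inE hi !orbT.
      have hir : i < size lam := hall _ hiw.
      have hi0 : 0 < i by rewrite lt0n; apply: contraNneq hv' => <-.
      rewrite hi0 /=; apply/existsP; exists (Ordinal hir); rewrite eqxx andbT hg inE hsf /=.
      exact: hi.
    + case/andP => hi0 /existsP [x /andP[hx /eqP <-]]; move: hx.
      by rewrite hg inE hsf.
  have ew : w = pfx w ++ 0 :: vS S by rewrite -{1}(pfx_sfx w) hsf hv'v.
  exists (pfx w) => //.
  set w' := pfx w.
  have hsw : size w = size w' + #|S|.+1 by rewrite {1}ew size_cat /= hsv.
  have hs' : size w' = sumn (lower lam (TS S)) by move: hsz; rewrite hsw -hsum => /eqP; rewrite eqn_add2r => /eqP.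
  have hall' x : x \in w' -> x < size lam by move=> hx; apply: hall; rewrite ew mem_cat hx.
  have hq' : Q (lower lam (TS S)) w'.
    apply/QP; split.
    - exact: hs'.
    - by move=> x hx; rewrite size_lower; apply: hall'.
    - move=> i; rewrite hnth -hc ew count_cat hcnt addnK //.
    - move=> k i; rewrite size_lower => hi.
      rewrite (take_min_cat w' (0 :: vS S) k) -ew; exact: hb.
  have hd' : wdes w' = sumn lam - nth 0 lam 0 - #|S|.
    by move: hd; rewrite ew wdes_cat // hsv => <-; rewrite addnK.
  rewrite mem_filter hq' hd' eqxx /= mem_words hs' eqxx /=.
  by apply/allP => x hx; apply: hall'.
- case=> w' hw' ->; move: hw'; rewrite mem_filter => /andP[/andP[hq' /eqP hd'] _].
  case/QP: hq' => hsz' hall' hc' hb'; rewrite size_lower in hall' hb'.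
  have hall x : x \in w' ++ 0 :: vS S -> x < size lam.
    rewrite mem_cat => /orP[/hall'//|]; rewrite hmem; exact: hTSr.
  have hsz : size (w' ++ 0 :: vS S) = sumn lam by rewrite size_cat /= hsv hsz' hsum.
  have hq : Q lam (w' ++ 0 :: vS S).
    apply/QP; split => //.
    - move=> i; rewrite count_cat hc' hcnt hnth.
      by case: (boolP (TS S i)) => h //=; rewrite ?subn0 ?addn0 // subnK // hposi // hTSr.
    - move=> k i hi; rewrite take_cat; case: ifP => hk; first exact: hb'.
      rewrite !count_cat.
      set p := take (k - size w') (0 :: vS S).
      have up : uniq p by rewrite /p; apply: take_uniq.
      have hfull := hb' (size w') i hi; rewrite take_size in hfull.
      rewrite !(count_uniq_mem _ up).
      case: (boolP (i.+1 \in p)) => hp1 /=.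
        2: by rewrite addn0; apply: leq_trans hfull (leq_addr _ _).
      case: (boolP (i \in p)) => hp0 /=; first by rewrite leq_add2r.
      have hT1 : TS S i.+1 by rewrite -hmem; exact: mem_take hp1.
      have hT0 : TS S i = false.
        apply/negP => h; move/negP: hp0; apply.
        apply: (@pfx_sorted_ltn (0 :: vS S) (k - size w') i i.+1 hpath hp1) => //; by rewrite hmem.
      have hi1 := hTSr _ hT1.
      rewrite !hc' !hnth hT1 hT0 /= subn0 !addn0 subnK; first exact: part_nth.
      exact: hposi.
  have hd : wdes (w' ++ 0 :: vS S) = sumn lam - nth 0 lam 0.
    by rewrite wdes_cat // hsv hd' subnK.
  have hg : S = gS (size lam) (w' ++ 0 :: vS S).
    have h0v : 0 \notin vS S by rewrite mem_vS.
    apply/setP => x; rewrite inE; have [-> _] := sfx_cat w' h0v.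
    rewrite /= mem_vS inS_ord; case: (boolP (x \in S)) => hx; rewrite ?andbF ?andbT //.
    by rewrite (forall_inP Hs x hx).
  have hg' : S == gS (size lam) (w' ++ 0 :: vS S) by apply/eqP.
  rewrite hq hd hg' eqxx /= mem_words hsz eqxx /=.
  by apply/allP.
Qed.


Lemma sum_partition (r : nat) (L : seq (seq nat)) (P : pred (seq nat))
   (g : seq nat -> {set 'I_r}) (F : seq nat -> {poly int}) :
  (\sum_(w <- L | P w) F w = \sum_(S : {set 'I_r}) \sum_(w <- L | P w && (S == g w)) F w)%R.
Proof.
rewrite (eq_bigr (fun S => \sum_(w <- L | P w) (if S == g w then F w else 0))%R); last first.
  by move=> S _; rewrite big_mkcondr.
rewrite exchange_big /=; apply: eq_bigr => w _.
by rewrite -big_mkcond /= big_pred1_eq.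
Qed.

Lemma Wmain lam : is_partition lam -> all (fun x => 0 < x) lam -> 0 < size lam ->
  Wsum lam (sumn lam - nth 0 lam 0) =
  (\sum_(S : {set 'I_(size lam)} | [forall i in S, (0 < val i)%N])
     'X^(#|S| * sumn lam - 'C(#|S|.+1, 2)) *
     Wsum (lower lam (TS S)) (sumn lam - nth 0 lam 0 - #|S|)%N)%R.
Proof.
move=> hp hpos hr; rewrite {1}/Wsum (sum_partition _ _ (gS (size lam))).
rewrite (bigID (fun S : {set 'I_(size lam)} => [forall i in S, 0 < val i])) /=.
rewrite [X in (_ + X)%R]big1 ?addr0.
  by apply: eq_bigr => S hS; apply: block.
move=> S hS; rewrite big1_seq // => w /andP[/andP[/andP[hq _] /eqP hg] _].
exfalso; move/negP: hS; apply; apply/forall_inP => x; rewrite hg inE.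
case/QP: hq => _ _ hc _.
have h0w : 0 \in w.
  apply: contraT => /count_memPn h; have := hc 0; rewrite h => e.
  by move/(all_nthP 0): hpos => /(_ 0 hr); rewrite -e.
case: (sfx_shape h0w) => v [-> hv] /= hx; rewrite lt0n; apply: contraNneq hv => <-; exact: hx.
Qed.


End Aux.
Import Aux.

Theorem mainTheorem10 (lam : seq nat) :
  is_partition lam -> all (fun x => 0 < x) lam ->
  let n := sumn lam in
  let r := size lam in
  fpoly lam (n - nth 0 lam 0) =
  (\sum_(S : {set 'I_r} | [forall i in S, (0 < val i)%N])
     'X^(#|S| * n - 'C(#|S|.+1, 2)) *
     fpoly (lower lam (fun i => (i == 0)%N || [exists x in S, val x == i]))
           (n - nth 0 lam 0 - #|S|)%N)%R.
Proof.
case: lam => [|l0 lt] hp hpos n r; rewrite {}/n {}/r.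
  rewrite (big_pred1 set0); last first.
    move=> S /=; have -> : S = set0 by apply/setP => [[]].
    by rewrite eqxx; apply/forall_inP => [[]].
  by rewrite cards0 mul0n /= expr0 mul1r.
rewrite fpolyW Wmain //; apply: eq_bigr => S _.
by rewrite fpolyW.
Qed.
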